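(* Let $(X,V)$ and $(\overline{X},\overline{V})$ be global solutions of the discrete Motsch–Tadmor model (as in the context) whose initial data satisfy \[ \max\{\|\Delta^x(0)\|_F,\|\Delta^{\overline{x}}(0)\|_F\}<M,\quad \|\Delta^v(0)\|_F<\kappa\int_{\|\Delta^x(0)\|_F}^M\psi(s)\,ds,\quad \|\Delta^{\overline{v}}(0)\|_F<\kappa\int_{\|\Delta^{\overline{x}}(0)\|_F}^M\psi(s)\,ds. \] For $i,j\in\{1,\dots,N\}$ and $n\ge0$ let \[ \mathcal{I}_2^{ij}=h\kappa\sum_{l\ne i,j}\Big[\overline{\phi}_{il}(n)\big(\Delta^v_{li}(n)-\Delta^{\overline{v}}_{li}(n)\big)-\overline{\phi}_{jl}(n)\big(\Delta^v_{lj}(n)-\Delta^{\overline{v}}_{lj}(n)\big)\Big], \] and $\alpha(n)=\max_{1\le i,j\le N}(1-\overline{\phi}_{ij}(n)-\overline{\phi}_{ii}(n))^2$. Then \[ \sum_{i,j=1}^N\|\mathcal{I}_2^{ij}\|^2\le2h^2\kappa^2\Big(\alpha(n)+\frac{L_a^2M^2}{Nc_1^2}\Big(1+\frac{c_2}{c_1}\Big)^2\Big)\|\Delta^v(n)-\Delta^{\overline{v}}(n)\|_F^2 . \]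
   Context: Discrete MT model: fix $N\ge1$, $d\ge1$, $\kappa>0$, $h>0$, and $a:[0,\infty)\to\mathbb{R}$ with constants $0<c_1\le c_2$, $c_1\le a\le c_2$, $|a(r_1)-a(r_2)|\le L_a|r_1-r_2|$ ($L_a>0$); $0<h<\min\{1,1/\kappa\}$. A solution satisfies $x_i(n+1)=x_i(n)+hv_i(n)$, $v_i(n+1)=v_i(n)+h\kappa\sum_j\phi_{ij}(n)(v_j(n)-v_i(n))$ with $\phi_{ij}(n)=\frac{a(\|x_i(n)-x_j(n)\|)}{\sum_ka(\|x_i(n)-x_k(n)\|)}$; $\overline{\phi}_{ij}(n)$ is defined likewise from $\overline{X}(n)$. Notation: $\Delta^x_{ij}=x_i-x_j$, $\Delta^v_{ij}=v_i-v_j$, similarly $\Delta^{\overline{x}},\Delta^{\overline{v}}$; $\|A\|_F=(\sum_{i,j}\|A_{ij}\|^2)^{1/2}$. Constants: $\|\phi\|_{\mathrm{Lip}}=\frac{L_a}{Nc_1}(1+\frac{c_2}{c_1})$, $M=\frac{1}{4N\|\phi\|_{\mathrm{Lip}}}$, $\psi(s)=1-\|\phi\|_{\mathrm{Lip}}Ns$. *)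

(* Defs.v *)
From HB Require Import structures.
From mathcomp Require Import all_boot all_order all_algebra.
From mathcomp Require Import all_classical all_reals all_analysis.
Set Implicit Arguments. Unset Strict Implicit. Unset Printing Implicit Defensive.
Import Order.TTheory GRing.Theory Num.Theory.
Import numFieldNormedType.Exports.
Local Open Scope ring_scope.

Section MT.
Variable R : realType.

Definition enorm (d : nat) (v : 'rV[R]_d) : R := Num.sqrt (\sum_(k < d) v 0 k ^+ 2).

Definition config (N d : nat) := nat -> 'I_N -> 'rV[R]_d.

Definition mt_phi (N d : nat) (a : R -> R) (X : config N d) (n : nat) (i j : 'I_N) : R :=
  a (enorm (X n i - X n j)) / \sum_(k < N) a (enorm (X n i - X n k)).

Definition is_MT_solution (N d : nat) (kappa h : R) (a : R -> R) (X V : config N d) : Prop :=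
  forall (n : nat) (i : 'I_N),
    X n.+1 i = X n i + h *: V n i /\
    V n.+1 i = V n i + (h * kappa) *: \sum_(j < N) mt_phi a X n i j *: (V n j - V n i).

Definition Delta (N d : nat) (Z : config N d) (n : nat) (i j : 'I_N) : 'rV[R]_d :=
  Z n i - Z n j.

Definition frob (N d : nat) (A : 'I_N -> 'I_N -> 'rV[R]_d) : R :=
  Num.sqrt (\sum_(i < N) \sum_(j < N) enorm (A i j) ^+ 2).

Definition phi_lip (N : nat) (La c1 c2 : R) : R := La / (N%:R * c1) * (1 + c2 / c1).
Definition bigM (N : nat) (La c1 c2 : R) : R := 1 / (4 * N%:R * phi_lip N La c1 c2).
Definition psi (N : nat) (La c1 c2 : R) (s : R) : R := 1 - phi_lip N La c1 c2 * N%:R * s.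

Definition I2 (N d : nat) (kappa h : R) (a : R -> R) (X V Xb Vb : config N d)
  (n : nat) (i j : 'I_N) : 'rV[R]_d :=
  (h * kappa) *: \sum_(l < N | (l != i) && (l != j))
     (mt_phi a Xb n i l *: (Delta V n l i - Delta Vb n l i)
      - mt_phi a Xb n j l *: (Delta V n l j - Delta Vb n l j)).

Definition alpha (N d : nat) (a : R -> R) (Xb : config N d) (n : nat) : R :=
  \big[Num.max/0]_(i < N) \big[Num.max/0]_(j < N)
     (1 - mt_phi a Xb n i j - mt_phi a Xb n i i) ^+ 2.

End MT.

(* Main.v *)
Require Import Defs.
From HB Require Import structures.
From mathcomp Require Import all_boot all_order all_algebra.
From mathcomp Require Import all_classical all_reals all_analysis.
From mathcomp Require Import ring lra.
Import Order.TTheory GRing.Theory Num.Theory.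
Import numFieldNormedType.Exports.
Set Implicit Arguments. Unset Strict Implicit. Unset Printing Implicit Defensive.
Local Open Scope ring_scope.
Section Gen.
Variable R : realType.

Lemma CS (I : finType) (f g : I -> R) :
  (\sum_i f i * g i) ^+ 2 <= (\sum_i f i ^+ 2) * (\sum_i g i ^+ 2).
Proof.
have H0 : 0 <= \sum_i \sum_j (f i * g j - f j * g i) ^+ 2.
  by apply: sumr_ge0 => i _; apply: sumr_ge0 => j _; exact: sqr_ge0.
have E : \sum_i \sum_j (f i * g j - f j * g i) ^+ 2 =
   (\sum_i \sum_j f i ^+ 2 * g j ^+ 2) + (\sum_i \sum_j f j ^+ 2 * g i ^+ 2)
   - 2 * \sum_i \sum_j (f i * g i) * (f j * g j).
  rewrite (eq_bigr (fun i => \sum_j (f i ^+ 2 * g j ^+ 2 + f j ^+ 2 * g i ^+ 2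
            - 2 * ((f i * g i) * (f j * g j))))); last first.
    by move=> i _; apply: eq_bigr => j _; ring.
  under eq_bigr => i _ do rewrite sumrB big_split /=.
  rewrite sumrB big_split /= mulr_sumr; congr (_ - _).
  by apply: eq_bigr => i _; rewrite mulr_sumr.
have E1 : \sum_i \sum_j f j ^+ 2 * g i ^+ 2 = \sum_i \sum_j f i ^+ 2 * g j ^+ 2.
  by rewrite exchange_big /=.
have E2 : \sum_i \sum_j f i ^+ 2 * g j ^+ 2 = (\sum_i f i ^+ 2) * (\sum_i g i ^+ 2).
  by rewrite mulr_suml; apply: eq_bigr => i _; rewrite mulr_sumr.
have E3 : \sum_i \sum_j (f i * g i) * (f j * g j) = (\sum_i f i * g i) ^+ 2.
  by rewrite expr2 mulr_suml; apply: eq_bigr => i _; rewrite mulr_sumr.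
rewrite E E1 E2 E3 in H0.
lra.
Qed.

Lemma sum_sq_ge0 (I : finType) (f : I -> R) : 0 <= \sum_i f i ^+ 2.
Proof. by apply: sumr_ge0 => i _; exact: sqr_ge0. Qed.

Lemma le_sqrt_sq (x y : R) : 0 <= y -> x <= y ^+ 2 -> Num.sqrt x <= y.
Proof.
move=> y0 xy; rewrite -(ger0_norm y0) -sqrtr_sqr ler_sqrt //; exact: sqr_ge0.
Qed.

Lemma mink (I : finType) (f g : I -> R) :
  Num.sqrt (\sum_i (f i + g i) ^+ 2) <=
  Num.sqrt (\sum_i f i ^+ 2) + Num.sqrt (\sum_i g i ^+ 2).
Proof.
apply: le_sqrt_sq; first by rewrite addr_ge0 // sqrtr_ge0.
set A := \sum_i f i ^+ 2; set B := \sum_i g i ^+ 2.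
have A0 : 0 <= A by exact: sum_sq_ge0.
have B0 : 0 <= B by exact: sum_sq_ge0.
have E : \sum_i (f i + g i) ^+ 2 = A + B + 2 * \sum_i f i * g i.
  rewrite /A /B mulr_sumr -!big_split /=; apply: eq_bigr => i _; ring.
have C : \sum_i f i * g i <= Num.sqrt A * Num.sqrt B.
  rewrite -sqrtrM //; apply: le_trans (ler_norm _) _.
  rewrite -sqrtr_sqr ler_sqrt; first exact: CS.
  exact: mulr_ge0.
rewrite E sqrrD !sqr_sqrtr //.
lra.
Qed.

Lemma CS1 (n : nat) (x : 'I_n -> R) : (\sum_i x i) ^+ 2 <= n%:R * \sum_i x i ^+ 2.
Proof.
have := @CS _ x (fun _ => 1).
under eq_bigr => i _ do rewrite mulr1.
under [X in _ <= _ * X]eq_bigr => i _ do rewrite expr1n.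
by rewrite sumr_const card_ord mulrC -mulr_natl mulr1.
Qed.

End Gen.
Section Norms.
Variable R : realType.
Variable d : nat.
Implicit Types u v w : 'rV[R]_d.

Lemma enorm_ge0 v : 0 <= enorm v.
Proof. exact: sqrtr_ge0. Qed.

Lemma enorm_sq v : enorm v ^+ 2 = \sum_k v 0 k ^+ 2.
Proof. by rewrite /enorm sqr_sqrtr // sum_sq_ge0. Qed.

Lemma enormD u v : enorm (u + v) <= enorm u + enorm v.
Proof.
rewrite /enorm (eq_bigr (fun k => (u 0 k + v 0 k) ^+ 2)); last by move=> k _; rewrite mxE.
exact: mink.
Qed.

Lemma enormZ (c : R) v : enorm (c *: v) = `|c| * enorm v.
Proof.
rewrite /enorm (eq_bigr (fun k => c ^+ 2 * v 0 k ^+ 2)); last first.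
  by move=> k _; rewrite mxE exprMn.
by rewrite -mulr_sumr sqrtrM ?sqr_ge0 // sqrtr_sqr.
Qed.

Lemma enormN v : enorm (- v) = enorm v.
Proof. by rewrite -scaleN1r enormZ normrN normr1 mul1r. Qed.

Lemma enormB u v : enorm (u - v) = enorm (v - u).
Proof. by rewrite -enormN opprB. Qed.

Lemma enorm0 : enorm (0 : 'rV[R]_d) = 0.
Proof. by rewrite -(scale0r 0) enormZ normr0 mul0r. Qed.

Lemma enorm_rev u w : `|enorm u - enorm w| <= enorm (u - w).
Proof.
have h1 : enorm u <= enorm (u - w) + enorm w.
  by have := enormD (u - w) w; rewrite subrK.
have h2 : enorm w <= enorm (u - w) + enorm u.
  by have := enormD (w - u) u; rewrite subrK enormB.
rewrite ler_norml; apply/andP; split; lra.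
Qed.

Lemma enorm_sum (I : finType) (P : pred I) (F : I -> 'rV[R]_d) :
  enorm (\sum_(i | P i) F i) <= \sum_(i | P i) enorm (F i).
Proof.
elim/big_ind2: _ => //.
- by rewrite enorm0.
- move=> x1 x2 y1 y2 h1 h2; apply: le_trans (enormD _ _) _; exact: lerD.
Qed.

Lemma enormBsq u w : enorm (u - w) ^+ 2 <= 2 * (enorm u ^+ 2 + enorm w ^+ 2).
Proof.
have h := enormD u (- w); rewrite enormN in h.
have h0 := enorm_ge0 (u - w); have hu := enorm_ge0 u; have hw := enorm_ge0 w.
apply: le_trans (_ : (enorm u + enorm w) ^+ 2 <= _).
  by rewrite ler_sqr // ?nnegrE ?addr_ge0.
have := sqr_ge0 (enorm u - enorm w); rewrite sqrrB sqrrD => ?; lra.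
Qed.

End Norms.

Section Frob.
Variable R : realType.
Variables N d : nat.
Implicit Types A B C : 'I_N -> 'I_N -> 'rV[R]_d.

Lemma frob_ge0 A : 0 <= frob A.
Proof. exact: sqrtr_ge0. Qed.

Lemma frob_sq A : frob A ^+ 2 = \sum_i \sum_j enorm (A i j) ^+ 2.
Proof.
rewrite /frob sqr_sqrtr //; apply: sumr_ge0 => i _; apply: sumr_ge0 => j _.
exact: sqr_ge0.
Qed.

Lemma frobD A B C : (forall i j, C i j = A i j + B i j) -> frob C <= frob A + frob B.
Proof.
move=> hC.
rewrite /frob !pair_big /=.
apply: (le_trans _ (mink (fun p : 'I_N * 'I_N => enorm (A p.1 p.2))
                      (fun p => enorm (B p.1 p.2)))).
rewrite ler_sqrt /=; last by apply: sumr_ge0 => p _; exact: sqr_ge0.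
apply: ler_sum => p _; rewrite hC ler_sqr ?nnegrE ?addr_ge0 ?enorm_ge0 //.
exact: enormD.
Qed.

Lemma frobZ (c : R) A C : (forall i j, C i j = c *: A i j) -> frob C = `|c| * frob A.
Proof.
move=> hC; rewrite /frob.
rewrite (eq_bigr (fun i => c ^+ 2 * \sum_j enorm (A i j) ^+ 2)); last first.
  move=> i _; rewrite mulr_sumr; apply: eq_bigr => j _.
  by rewrite hC enormZ exprMn real_normK // num_real.
rewrite -mulr_sumr sqrtrM ?sqr_ge0 // sqrtr_sqr //.
Qed.

Lemma row_le_frob A i : \sum_l enorm (A l i) ^+ 2 <= frob A ^+ 2.
Proof.
rewrite frob_sq; apply: ler_sum => l _.
rewrite (bigD1 i) //= lerDl; apply: sumr_ge0 => j _; exact: sqr_ge0.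
Qed.

End Frob.
Lemma key_ineq (R : realType) (x y s t D n c1 c2 : R) : 0 < c1 -> 0 < n ->
  n * c1 <= s -> n * c1 <= t -> 0 <= y -> y <= c2 -> `|x - y| <= D -> `|s - t| <= n * D ->
  `|x / s - y / t| <= D / (n * c1) * (1 + c2 / c1).
Proof.
move=> c10 n0 hs ht y0 yc2 hD hST.
have nc0 : 0 < n * c1 by exact: mulr_gt0.
have s0 : 0 < s by exact: lt_le_trans hs.
have t0 : 0 < t by exact: lt_le_trans ht.
have D0 : 0 <= D by exact: le_trans (normr_ge0 _) hD.
have E : x / s - y / t = (x - y) * s^-1 + (y * (t - s)) * (s * t)^-1.
  by field; apply/andP; split; rewrite gt_eqF.
have hsi : s^-1 <= (n * c1)^-1 by rewrite lef_pV2 ?posrE.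
have ist : (s * t)^-1 <= (n * c1 * (n * c1))^-1.
  by rewrite lef_pV2 ?posrE ?mulr_gt0 // ler_pM // ltW.
have b1 : `|(x - y) * s^-1| <= D * (n * c1)^-1.
  rewrite normrM (gtr0_norm (x := s^-1)) ?invr_gt0 //.
  by apply: ler_pM => //; rewrite invr_ge0 ltW.
have b2 : `|(y * (t - s)) * (s * t)^-1| <= (c2 * (n * D)) * (n * c1 * (n * c1))^-1.
  rewrite normrM (gtr0_norm (x := (s * t)^-1)) ?invr_gt0 ?mulr_gt0 //.
  apply: ler_pM => //; first by rewrite invr_ge0 ltW ?mulr_gt0.
  rewrite normrM (ger0_norm y0); apply: ler_pM => //; by rewrite distrC.
rewrite E; apply: le_trans (ler_normD _ _) _.
apply: le_trans (lerD b1 b2) _.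
rewrite le_eqVlt; apply/orP; left; apply/eqP.
by field; apply/andP; split; rewrite gt_eqF.
Qed.
Section Phi.
Variable R : realType.
Variables (N d : nat) (a : R -> R) (c1 c2 La : R) (X : config R N d) (n : nat).
Hypothesis N0 : (0 < N)%N.
Hypothesis c10 : 0 < c1.
Hypothesis La0 : 0 < La.
Hypothesis Ha : forall r, 0 <= r -> c1 <= a r <= c2.
Hypothesis HL : forall r1 r2, 0 <= r1 -> 0 <= r2 -> `|a r1 - a r2| <= La * `|r1 - r2|.

Lemma sumA_ge i : N%:R * c1 <= \sum_k a (enorm (X n i - X n k)).
Proof.
have : \sum_(k < N) c1 <= \sum_k a (enorm (X n i - X n k)).
  by apply: ler_sum => k _; have /andP[] := Ha (enorm_ge0 (X n i - X n k)).
by rewrite sumr_const card_ord mulr_natl.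
Qed.

Lemma sumA_gt0 i : 0 < \sum_k a (enorm (X n i - X n k)).
Proof. by apply: lt_le_trans (sumA_ge i); rewrite mulr_gt0 // ltr0n. Qed.

Lemma phi_sum1 i : \sum_l mt_phi a X n i l = 1.
Proof. by rewrite /mt_phi -mulr_suml divff // gt_eqF // sumA_gt0. Qed.

Lemma A_lip i j l :
  `|a (enorm (X n i - X n l)) - a (enorm (X n j - X n l))| <= La * enorm (X n i - X n j).
Proof.
have h1 := HL (enorm_ge0 (X n i - X n l)) (enorm_ge0 (X n j - X n l)).
apply: le_trans h1 _.
apply: ler_wpM2l; first exact: ltW.
apply: le_trans (enorm_rev _ _) _.
by rewrite opprB addrA subrK.
Qed.

Lemma phi_lipb i j l :
  `|mt_phi a X n i l - mt_phi a X n j l| <= phi_lip N La c1 c2 * enorm (X n i - X n j).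
Proof.
have hN : (0 : R) < N%:R by rewrite ltr0n.
have e0 := enorm_ge0 (X n i - X n j).
have hy := Ha (enorm_ge0 (X n j - X n l)); move/andP: hy => [hy1 hy2].
have := @key_ineq R (a (enorm (X n i - X n l))) (a (enorm (X n j - X n l)))
  (\sum_k a (enorm (X n i - X n k))) (\sum_k a (enorm (X n j - X n k)))
  (La * enorm (X n i - X n j)) N%:R c1 c2 c10 hN (sumA_ge i) (sumA_ge j)
  (le_trans (ltW c10) hy1) hy2 (A_lip i j l).
have hS : `|\sum_k a (enorm (X n i - X n k)) - \sum_k a (enorm (X n j - X n k))|
          <= N%:R * (La * enorm (X n i - X n j)).
  rewrite -sumrB; apply: le_trans (ler_norm_sum _ _ _) _.
  have : \sum_(k < N) `|a (enorm (X n i - X n k)) - a (enorm (X n j - X n k))|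
     <= \sum_(k < N) (La * enorm (X n i - X n j)) by apply: ler_sum => k _; exact: A_lip.
  by rewrite sumr_const card_ord mulr_natl.
move=> /(_ hS).
rewrite /mt_phi /phi_lip.
have -> : La * enorm (X n i - X n j) / (N%:R * c1) * (1 + c2 / c1)
        = La / (N%:R * c1) * (1 + c2 / c1) * enorm (X n i - X n j) by ring.
done.
Qed.

End Phi.
Section Bounds.
Variable R : realType.
Variables (N d : nat).

Lemma sum_bound (P : pred 'I_N) (c : 'I_N -> R) (W : 'I_N -> 'rV[R]_d) (K : R) :
  0 <= K -> (forall l, `|c l| <= K) ->
  enorm (\sum_(l | P l) c l *: W l) ^+ 2 <= K ^+ 2 * N%:R * \sum_l enorm (W l) ^+ 2.
Proof.
move=> K0 hc.
have h1 : enorm (\sum_(l | P l) c l *: W l) <= K * \sum_l enorm (W l).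
  apply: le_trans (enorm_sum _ _) _.
  rewrite mulr_sumr big_mkcond /=; apply: ler_sum => l _.
  case: (P l); last by rewrite mulr_ge0 ?enorm_ge0.
  rewrite enormZ; apply: ler_wpM2r; [exact: enorm_ge0 | exact: hc].
have s0 : 0 <= \sum_l enorm (W l) by apply: sumr_ge0 => l _; exact: enorm_ge0.
apply: le_trans (_ : (K * \sum_l enorm (W l)) ^+ 2 <= _).
  by rewrite ler_sqr ?nnegrE ?mulr_ge0 ?enorm_ge0.
rewrite exprMn -mulrA; apply: ler_wpM2l; first exact: sqr_ge0.
exact: CS1.
Qed.

Lemma sumsq_bound (B Xd W : 'I_N -> 'I_N -> 'rV[R]_d) (K : R) : 0 <= K ->
  (forall i j, enorm (B i j) ^+ 2 <= (K * enorm (Xd i j)) ^+ 2 * N%:R * \sum_l enorm (W l i) ^+ 2) ->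
  \sum_i \sum_j enorm (B i j) ^+ 2 <= K ^+ 2 * N%:R * frob Xd ^+ 2 * frob W ^+ 2.
Proof.
move=> K0 hB.
set C := K ^+ 2 * N%:R * frob W ^+ 2.
have step : forall i j, enorm (B i j) ^+ 2 <= C * enorm (Xd i j) ^+ 2.
  move=> i j; apply: le_trans (hB i j) _.
  have h0 : 0 <= (K * enorm (Xd i j)) ^+ 2 * N%:R.
    by rewrite mulr_ge0 ?sqr_ge0 ?ler0n.
  have := ler_wpM2l h0 (row_le_frob W i).
  rewrite /C exprMn => h; lra.
apply: (@le_trans _ _ (\sum_i \sum_j C * enorm (Xd i j) ^+ 2)).
  by apply: ler_sum => i _; apply: ler_sum => j _; exact: step.
have -> : \sum_i \sum_j C * enorm (Xd i j) ^+ 2 = C * frob Xd ^+ 2.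
  by rewrite frob_sq mulr_sumr; apply: eq_bigr => i _; rewrite mulr_sumr.
by rewrite /C le_eqVlt; apply/orP; left; apply/eqP; ring.
Qed.

End Bounds.
Lemma inv_step (R : realType) (h k p M x v x' v' : R) : 0 < h -> 0 < k -> h * k < 1 -> 0 < p ->
  p * M = 1/4 -> 0 <= x -> 0 <= v -> 0 <= x' -> x' <= x + h * v ->
  v' <= (1 - h * k + h * k * p * x) * v -> x < M ->
  v < k * ((M - p/2 * M^+2) - (x - p/2 * x^+2)) ->
  x' < M /\ v' < k * ((M - p/2 * M^+2) - (x' - p/2 * x'^+2)).
Proof.
move=> h0 k0 hk p0 pM x0 v0 x'0 hx hv xM vG.
have GM : (M - p/2 * M^+2) - (x - p/2 * x^+2) <= M - x.
  have sq : x ^+ 2 <= M ^+ 2 by rewrite ler_sqr ?nnegrE //; lra.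
  have : p * x ^+ 2 <= p * M ^+ 2 by rewrite ler_pM2l.
  move=> ?; lra.
have vM : v < k * (M - x) by apply: lt_le_trans vG _; rewrite ler_pM2l.
have hv2 : h * v < h * k * (M - x) by rewrite -mulrA ltr_pM2l.
have psi0 : 0 <= 1 - p * x.
  have : p * x <= p * M by rewrite ler_pM2l // ltW.
  lra.
have xM' : x' < M.
  have : h * k * (M - x) <= M - x by apply: ler_piMl; [lra | exact: ltW].
  lra.
split => //.
(* key: k*G(x') >= k*G(x) - k*psi(x)*(x'-x) >= k*G(x) - h*k*psi(x)*v *)
have E : (M - p/2 * M^+2) - (x' - p/2 * x'^+2) =
   ((M - p/2 * M^+2) - (x - p/2 * x^+2)) - (1 - p * x) * (x' - x) + p/2 * (x' - x)^+2.
  by field.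
have q0 : 0 <= p/2 * (x' - x)^+2 by rewrite mulr_ge0 ?sqr_ge0 // divr_ge0 // ltW.
have c1 : (1 - p * x) * (x' - x) <= (1 - p * x) * (h * v).
  by apply: ler_wpM2l => //; lra.
have c2 : k * ((1 - p * x) * (h * v)) = h * k * (1 - p * x) * v by ring.
have c3 : v' <= v - h * k * (1 - p * x) * v.
  have -> : v - h * k * (1 - p * x) * v = (1 - h * k + h * k * p * x) * v by ring.
  done.
rewrite E.
have c4 : k * ((1 - p * x) * (x' - x)) <= k * ((1 - p * x) * (h * v)) by rewrite ler_pM2l.
have c5 : 0 <= k * (p / 2 * (x' - x) ^+ 2) by apply: mulr_ge0; [exact: ltW | exact: q0].
rewrite mulrDr mulrBr.
lra.
Qed.
Lemma vec_id (R : realType) (d : nat) (vi vj s t : 'rV[R]_d) (k : R) :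
  (vi + k *: s) - (vj + k *: (t + (vi - vj))) = (1 - k) *: (vi - vj) + k *: (s - t).
Proof. by apply/rowP => m; rewrite !mxE; ring. Qed.

Lemma vec_id2 (R : realType) (d : nat) (xi xj vi vj : 'rV[R]_d) (h : R) :
  (xi + h *: vi) - (xj + h *: vj) = (xi - xj) + h *: (vi - vj).
Proof. by apply/rowP => m; rewrite !mxE; ring. Qed.

Section Sol.
Variable R : realType.
Variables (N d : nat) (a : R -> R) (c1 c2 La kappa h : R) (X V : config R N d).
Hypothesis N0 : (0 < N)%N.
Hypothesis c10 : 0 < c1.
Hypothesis c12 : c1 <= c2.
Hypothesis La0 : 0 < La.
Hypothesis Ha : forall r, 0 <= r -> c1 <= a r <= c2.
Hypothesis HL : forall r1 r2, 0 <= r1 -> 0 <= r2 -> `|a r1 - a r2| <= La * `|r1 - r2|.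
Hypothesis k0 : 0 < kappa.
Hypothesis h0 : 0 < h.
Hypothesis hk1 : h * kappa < 1.
Hypothesis sol : is_MT_solution kappa h a X V.

Lemma Lp_gt0 : 0 < phi_lip N La c1 c2.
Proof.
rewrite /phi_lip mulr_gt0 // ?divr_gt0 ?mulr_gt0 ?ltr0n //.
by rewrite addr_gt0 // divr_gt0 //; apply: lt_le_trans c12.
Qed.

Lemma Dx_step n : frob (Delta X n.+1) <= frob (Delta X n) + h * frob (Delta V n).
Proof.
rewrite -(gtr0_norm h0) -(@frobZ _ _ _ h (Delta V n) (fun i j => h *: Delta V n i j)) //.
apply: frobD => i j.
rewrite /Delta; case: (sol n i) => -> _; case: (sol n j) => -> _.
exact: vec_id2.
Qed.

Definition Bm n i j := \sum_l (mt_phi a X n i l - mt_phi a X n j l) *: Delta V n l i.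

Lemma dv_id n i j :
  Delta V n.+1 i j = (1 - h * kappa) *: Delta V n i j + (h * kappa) *: Bm n i j.
Proof.
rewrite /Delta; case: (sol n i) => _ ->; case: (sol n j) => _ ->.
have E : \sum_l mt_phi a X n j l *: (V n l - V n j) =
         \sum_l mt_phi a X n j l *: (V n l - V n i) + (V n i - V n j).
  rewrite (eq_bigr (fun l => mt_phi a X n j l *: (V n l - V n i)
                          + mt_phi a X n j l *: (V n i - V n j))); last first.
    by move=> l _; rewrite -scalerDr addrA subrK.
  by rewrite big_split /= -scaler_suml (phi_sum1 _ _ N0 c10 Ha) scale1r.
rewrite E vec_id; congr (_ + _ *: _).
by rewrite /Bm -sumrB; apply: eq_bigr => l _; rewrite scalerBl.
Qed.

Lemma Bm_bound n : frob (Bm n) <=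
  phi_lip N La c1 c2 * N%:R * frob (Delta X n) * frob (Delta V n).
Proof.
have Lp0 := Lp_gt0.
have H : \sum_i \sum_j enorm (Bm n i j) ^+ 2 <=
   phi_lip N La c1 c2 ^+ 2 * N%:R * frob (Delta X n) ^+ 2 * frob (Delta V n) ^+ 2.
  apply: sumsq_bound; first exact: ltW.
  move=> i j; apply: sum_bound.
    by rewrite mulr_ge0 ?enorm_ge0 // ltW.
  by move=> l; exact: (phi_lipb X n N0 c10 La0 Ha HL).
rewrite {1}/frob; apply: le_sqrt_sq.
  apply: mulr_ge0; [apply: mulr_ge0; [apply: mulr_ge0; [exact: ltW | by rewrite ler0n] | exact: frob_ge0] | exact: frob_ge0].
apply: le_trans H _.
have hN : (N%:R : R) <= N%:R ^+ 2.
  by rewrite expr2 ler_peMl ?ler0n // ler1n.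
have := ler_wpM2l (mulr_ge0 (sqr_ge0 (phi_lip N La c1 c2))
          (mulr_ge0 (sqr_ge0 (frob (Delta X n))) (sqr_ge0 (frob (Delta V n))))) hN.
move=> hh.
set L := phi_lip N La c1 c2 in hh *; set A := frob (Delta X n) in hh *;
set B := frob (Delta V n) in hh *.
have -> : L ^+ 2 * N%:R * A ^+ 2 * B ^+ 2 = L ^+ 2 * (A ^+ 2 * B ^+ 2) * N%:R by ring.
have -> : (L * N%:R * A * B) ^+ 2 = L ^+ 2 * (A ^+ 2 * B ^+ 2) * N%:R ^+ 2 by ring.
done.
Qed.

Lemma Dv_step n : frob (Delta V n.+1) <=
  (1 - h * kappa + h * kappa * (phi_lip N La c1 c2 * N%:R) * frob (Delta X n)) * frob (Delta V n).
Proof.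
have hk0 : 0 < h * kappa by rewrite mulr_gt0.
apply: le_trans (frobD (A := fun i j => (1 - h * kappa) *: Delta V n i j)
                      (B := fun i j => (h * kappa) *: Bm n i j) (dv_id n)) _.
rewrite (@frobZ _ _ _ (1 - h * kappa) (Delta V n) (fun i j => (1 - h * kappa) *: Delta V n i j)) //.
rewrite (@frobZ _ _ _ (h * kappa) (Bm n) (fun i j => (h * kappa) *: Bm n i j)) //.
rewrite (ger0_norm (x := 1 - h * kappa)); last by have := hk1; lra.
rewrite (gtr0_norm hk0).
apply: le_trans (lerD (lexx _) (ler_wpM2l (ltW hk0) (Bm_bound n))) _.
by rewrite le_eqVlt; apply/orP; left; apply/eqP; ring.
Qed.

End Sol.
Lemma int_lin (R : realType) (p a b : R) : a < b ->
  \int[lebesgue_measure]_(s in `[a,b]) (1 - p * s) = (b - p/2*b^+2) - (a - p/2*a^+2).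
Proof.
move=> ab.
have eF : (fun s : R => s - p/2 * s^+2) = (@id R - (p/2) \*: (@id R ^+ 2)).
  by apply/funext => s /=.
have dF : forall x : R, is_derive x 1 (fun s : R => s - p/2 * s^+2) (1 - p * x).
  move=> x; rewrite eF.
  apply: is_derive_eq.
  rewrite /= scaler1 expr1.
  rewrite -[X in _ - X = _]/((p/2) * (2 * x)).
  by field.
have cF : continuous (fun s : R => s - p/2 * s^+2).
  move=> x; have [d _] := dF x; apply: differentiable_continuous.
  exact/derivable1_diffP.
rewrite /Rintegral (@continuous_FTC2 _ _ (fun s : R => s - p/2 * s^+2))//.
- apply: (@continuous_subspaceT R R) => x.
  apply: continuousB; first exact: cvg_cst.
  apply: continuousM; first exact: cvg_cst.
  exact: cvg_id.
- split.
  + by move=> x _; have [] := dF x.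
  + apply: cvg_at_right_filter.
    exact: cF.
  + apply: cvg_at_left_filter.
    exact: cF.
- by move=> x _; rewrite derive1E; have [_ ->] := dF x.
Qed.

Lemma invariant (R : realType) (N d : nat) (a : R -> R) (c1 c2 La kappa h : R)
  (X V : config R N d) :
  (0 < N)%N -> 0 < c1 -> c1 <= c2 -> 0 < La ->
  (forall r, 0 <= r -> c1 <= a r <= c2) ->
  (forall r1 r2, 0 <= r1 -> 0 <= r2 -> `|a r1 - a r2| <= La * `|r1 - r2|) ->
  0 < kappa -> 0 < h -> h * kappa < 1 -> is_MT_solution kappa h a X V ->
  frob (Delta X 0) < bigM N La c1 c2 ->
  frob (Delta V 0) <
    kappa * (\int[lebesgue_measure]_(s in `[frob (Delta X 0), bigM N La c1 c2])
                psi N La c1 c2 s) ->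
  forall n, frob (Delta X n) < bigM N La c1 c2.
Proof.
move=> N0 c10 c12 La0 Ha HL k0 h0 hk1 sol hx0 hv0.
have Lp0 := Lp_gt0 N0 c10 c12 La0.
set Lp := phi_lip N La c1 c2 in Lp0 *.
set M := bigM N La c1 c2 in hx0 hv0 *.
set p := Lp * N%:R.
have hN : (0 : R) < N%:R by rewrite ltr0n.
have p0 : 0 < p by rewrite mulr_gt0.
have pM : p * M = 1/4.
  rewrite /p /M /bigM -/Lp; field.
  by apply/andP; split; rewrite gt_eqF.
have E : \int[lebesgue_measure]_(s in `[frob (Delta X 0), M]) psi N La c1 c2 s
   = (M - p/2 * M^+2) - (frob (Delta X 0) - p/2 * frob (Delta X 0)^+2)
   := int_lin p hx0.
rewrite E in hv0.
suff H : forall n, frob (Delta X n) < M /\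
   frob (Delta V n) < kappa * ((M - p/2 * M^+2) - (frob (Delta X n) - p/2 * frob (Delta X n)^+2)).
  by move=> n; case: (H n).
elim => [|n [IH1 IH2]]; first by split.
exact: (inv_step h0 k0 hk1 p0 pM (frob_ge0 _) (frob_ge0 _) (frob_ge0 _)
  (Dx_step h0 sol n) (Dv_step N0 c10 c12 La0 Ha HL k0 h0 hk1 sol n) IH1 IH2).
Qed.
Theorem lemma4p5 (R : realType) (N d : nat) (kappa h : R) (a : R -> R)
  (c1 c2 La : R) (X V Xb Vb : config R N d) :
  (0 < N)%N -> (0 < d)%N -> 0 < kappa -> 0 < h ->
  0 < c1 -> c1 <= c2 -> 0 < La ->
  (forall r, 0 <= r -> c1 <= a r <= c2) ->
  (forall r1 r2, 0 <= r1 -> 0 <= r2 -> `|a r1 - a r2| <= La * `|r1 - r2|) ->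
  h < 1 -> h < 1 / kappa ->
  is_MT_solution kappa h a X V ->
  is_MT_solution kappa h a Xb Vb ->
  Num.max (frob (Delta X 0)) (frob (Delta Xb 0)) < bigM N La c1 c2 ->
  frob (Delta V 0) <
    kappa * (\int[lebesgue_measure]_(s in `[frob (Delta X 0), bigM N La c1 c2])
                psi N La c1 c2 s) ->
  frob (Delta Vb 0) <
    kappa * (\int[lebesgue_measure]_(s in `[frob (Delta Xb 0), bigM N La c1 c2])
                psi N La c1 c2 s) ->
  forall n : nat,
    \sum_(i < N) \sum_(j < N) enorm (I2 kappa h a X V Xb Vb n i j) ^+ 2
    <= 2 * h ^+ 2 * kappa ^+ 2 *
       (alpha a Xb n + La ^+ 2 * bigM N La c1 c2 ^+ 2 / (N%:R * c1 ^+ 2) * (1 + c2 / c1) ^+ 2)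
       * frob (fun i j => Delta V n i j - Delta Vb n i j) ^+ 2.
Proof.
move=> N0 d0 k0 h0 c10 c12 La0 Ha HL h1 hk sol solb hmax hv0 hvb0 n.
have hk1 : h * kappa < 1.
  by move: hk; rewrite ltr_pdivlMr // mul1r.
have Lp0 := Lp_gt0 N0 c10 c12 La0.
have hxb0 : frob (Delta Xb 0) < bigM N La c1 c2.
  by move: hmax; rewrite gt_max => /andP[].
have DxbM := invariant N0 c10 c12 La0 Ha HL k0 h0 hk1 solb hxb0 hvb0 n.
set W := fun i j => Delta V n i j - Delta Vb n i j.
set Lp := phi_lip N La c1 c2 in Lp0 *.
set M := bigM N La c1 c2 in hxb0 DxbM *.
set Am := fun i j => \sum_(l | (l != i) && (l != j))
            (mt_phi a Xb n i l - mt_phi a Xb n j l) *: W l i.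
set cc := fun i j : 'I_N => \sum_(l | (l != i) && (l != j)) mt_phi a Xb n j l.
have EI : forall i j, I2 kappa h a X V Xb Vb n i j = (h * kappa) *: (Am i j - cc i j *: W i j).
  move=> i j; rewrite /I2; congr (_ *: _).
  rewrite /Am /cc scaler_suml -sumrB; apply: eq_bigr => l _.
  by apply/rowP => m; rewrite /W /Delta !mxE; ring.
have hk0 : 0 < h * kappa by rewrite mulr_gt0.
have HA : \sum_i \sum_j enorm (Am i j) ^+ 2 <= Lp ^+ 2 * N%:R * frob (Delta Xb n) ^+ 2 * frob W ^+ 2.
  apply: sumsq_bound; first exact: ltW.
  move=> i j; apply: sum_bound.
    by rewrite mulr_ge0 ?enorm_ge0 // ltW.
  by move=> l; exact: (phi_lipb Xb n N0 c10 La0 Ha HL).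
have HC : \sum_i \sum_j enorm (cc i j *: W i j) ^+ 2 <= alpha a Xb n * frob W ^+ 2.
  rewrite frob_sq mulr_sumr; apply: ler_sum => i _; rewrite mulr_sumr; apply: ler_sum => j _.
  case: (eqVneq i j) => [<-|ij].
    have -> : W i i = 0 by rewrite /W /Delta !subrr.
    by rewrite scaler0 enorm0 expr0n /= mulr0.
  rewrite enormZ exprMn real_normK ?num_real //.
  apply: ler_wpM2r; first exact: sqr_ge0.
  have -> : cc i j = 1 - mt_phi a Xb n j i - mt_phi a Xb n j j.
    have := phi_sum1 Xb n N0 c10 Ha j.
    rewrite (bigD1 i) //= (bigD1 j) //= 1?eq_sym ?ij // => hs.
    rewrite /cc -hs; ring.
  rewrite /alpha.
  apply: le_trans (le_bigmax 0 (fun j0 : 'I_N => (1 - mt_phi a Xb n j j0 - mt_phi a Xb n j j) ^+ 2) i) _.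
  exact: (le_bigmax 0 (fun i0 : 'I_N => \big[Num.max/0]_(j0 < N)
       (1 - mt_phi a Xb n i0 j0 - mt_phi a Xb n i0 i0) ^+ 2) j).
set SA := \sum_i \sum_j enorm (Am i j) ^+ 2 in HA.
set SC := \sum_i \sum_j enorm (cc i j *: W i j) ^+ 2 in HC.
have Hsum : \sum_i \sum_j enorm (I2 kappa h a X V Xb Vb n i j) ^+ 2
            <= (h * kappa) ^+ 2 * 2 * (SA + SC).
  rewrite /SA /SC -big_split mulr_sumr; apply: ler_sum => i _.
  rewrite -big_split mulr_sumr; apply: ler_sum => j _.
  rewrite EI enormZ exprMn (gtr0_norm hk0) -mulrA.
  apply: ler_wpM2l; first exact: sqr_ge0.
  exact: enormBsq.
have D0 := frob_ge0 (Delta Xb n).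
have D2 : frob (Delta Xb n) ^+ 2 <= M ^+ 2.
  have DM := ltW DxbM; have M0 : 0 <= M := le_trans D0 DM.
  by rewrite ler_sqr ?nnegrE.
have HA' : SA <= Lp ^+ 2 * N%:R * M ^+ 2 * frob W ^+ 2.
  apply: le_trans HA _.
  apply: ler_wpM2r; first exact: sqr_ge0.
  apply: ler_wpM2l => //.
  by rewrite mulr_ge0 ?sqr_ge0 ?ler0n.
have H2 := lerD HA' HC.
apply: le_trans Hsum _.
apply: le_trans (ler_wpM2l _ H2) _.
  by rewrite mulr_ge0 ?sqr_ge0.
rewrite le_eqVlt; apply/orP; left; apply/eqP.
rewrite /Lp /phi_lip; field.
by apply/andP; split; rewrite gt_eqF // ltr0n.
Qed.
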